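(* Let $n\ge4$, $k=3$, $d$ an integer, and let $A_c=(\alpha_c,n_1,d_1,k_1,n_2,d_2,k_2)$ be an allowable critical data set for type $(n,d,3)$ with $k_1=2$, $k_2=1$. Then $C_{21}>0$, except in the following four cases, where $C_{21}=0$: (a) $(n_1,n_2,d_1,d_2)=(4,3,7,6)$, $\alpha_c=\frac32$; (b) $(n_1,n_2,d_1,d_2)=(3,3,5,6)$, $\alpha_c=1$; (c) $(n_1,n_2,d_1,d_2)=(2,3,3,6)$, $\alpha_c=\frac34$; (d) $(n_1,n_2,d_1,d_2)=(1,3,1,6)$, $\alpha_c=\frac35$.
   Context: Let $0<k<n$ and $d$ be integers. Write $d=na-t$ with integers $a,t$, $0\le t<n$, and $ka=l(n-k)+t+m$ with integers $l,m$, $0\le m<n-k$. A critical data set for type $(n,d,k)$ is a tuple $A_c=(\alpha_c,n_1,d_1,k_1,n_2,d_2,k_2)$ with integers $n_i\ge1$, $k_i\ge0$, $d_i$ such that $n_1+n_2=n$, $d_1+d_2=d$, $k_1+k_2=k$, $\frac{d_2}{n_2}>\frac{d_1}{n_1}$, $\frac{k_1}{n_1}>\frac{k_2}{n_2}$, and $\alpha_c=\frac{d_2n_1-d_1n_2}{n_2k_1-n_1k_2}$. It is allowable if moreover $\frac tk<\alpha_c<\frac{ln+t}{k}$, $d\ge\frac1k(n^2-1)-(n-k)$, $d_1\ge\frac1{k_1}(n_1^2-1)-(n_1-k_1)$, and either ($k_2=0$ and $n_2=1$) or ($k_2\ge1$ and $d_2\ge\frac1{k_2}(n_2^2-1)-(n_2-k_2)$).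 Define $C_{21}=-n_1n_2+d_2n_1-d_1n_2+k_2(d_1+n_1-k_1)$. *)

(* Defs.v *)
From Stdlib Require Import ZArith QArith.
Open Scope Z_scope.

(* d = n*a - t with 0 <= t < n  (requires n > 0): a = ceil(d/n). *)
Definition a_of (n d : Z) : Z := - ((- d) / n).
Definition t_of (n d : Z) : Z := n * a_of n d - d.
(* k*a = l*(n-k) + t + m with 0 <= m < n-k  (requires n-k > 0). *)
Definition l_of (n d k : Z) : Z := (k * a_of n d - t_of n d) / (n - k).
Definition m_of (n d k : Z) : Z := (k * a_of n d - t_of n d) mod (n - k).

Definition inject (z : Z) : Q := inject_Z z.

Definition critical_data_set (n d k : Z) (alpha : Q) (n1 d1 k1 n2 d2 k2 : Z) : Prop :=
  1 <= n1 /\ 1 <= n2 /\ 0 <= k1 /\ 0 <= k2 /\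
  n1 + n2 = n /\ d1 + d2 = d /\ k1 + k2 = k /\
  (inject d2 / inject n2 > inject d1 / inject n1)%Q /\
  (inject k1 / inject n1 > inject k2 / inject n2)%Q /\
  alpha == (inject (d2 * n1 - d1 * n2) / inject (n2 * k1 - n1 * k2))%Q.

Definition d_bound (n d k : Z) : Prop :=
  (inject d >= inject (n * n - 1) / inject k - inject (n - k))%Q.

Definition allowable (n d k : Z) (alpha : Q) (n1 d1 k1 n2 d2 k2 : Z) : Prop :=
  critical_data_set n d k alpha n1 d1 k1 n2 d2 k2 /\
  (inject (t_of n d) / inject k < alpha)%Q /\
  (alpha < inject (l_of n d k * n + t_of n d) / inject k)%Q /\
  d_bound n d k /\
  d_bound n1 d1 k1 /\
  ((k2 = 0 /\ n2 = 1) \/ (1 <= k2 /\ d_bound n2 d2 k2)).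

Definition C21 (n1 d1 k1 n2 d2 k2 : Z) : Z :=
  - n1 * n2 + d2 * n1 - d1 * n2 + k2 * (d1 + n1 - k1).

(* Main.v *)
Require Import Defs.
From Stdlib Require Import ZArith QArith Lia Psatz.
Open Scope Z_scope.

Lemma qdiv_eq (a b : Z) : 0 < b -> (inject a / inject b == a # Z.to_pos b)%Q.
Proof.
  intros Hb. destruct b as [|p|p]; try lia.
  unfold inject, inject_Z, Qdiv, Qmult, Qinv, Qeq; simpl. lia.
Qed.

Lemma qlt_frac (a b c e : Z) : 0 < b -> 0 < e ->
  (inject a / inject b < inject c / inject e)%Q -> a * e < c * b.
Proof.
  intros Hb He H. rewrite (qdiv_eq a b Hb), (qdiv_eq c e He) in H.
  unfold Qlt in H; simpl in H. rewrite !Z2Pos.id in H by lia. lia.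
Qed.

Lemma dbound_Z (n d k : Z) : 0 < k -> d_bound n d k -> k*d >= n*n - 1 - k*(n-k).
Proof.
  intros Hk H. unfold d_bound in H. rewrite (qdiv_eq _ _ Hk) in H.
  destruct k as [|p|p]; try lia.
  unfold inject, inject_Z, Qle, Qminus, Qplus, Qopp in H; simpl in H. lia.
Qed.
Lemma core (n1 n2 d1 d2 a t : Z) :
  4 <= n1 + n2 -> 1 <= n1 -> 1 <= n2 -> n1 < 2*n2 ->
  d1 * n2 < d2 * n1 ->
  t = (n1+n2)*a - (d1+d2) -> 0 <= t < n1+n2 ->
  t * (2*n2 - n1) < 3 * (d2*n1 - d1*n2) ->
  3*(d1+d2) >= (n1+n2)*(n1+n2) - 1 - 3*(n1+n2-3) ->
  2*d1 >= n1*n1 - 1 - 2*(n1-2) ->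
  d2 >= n2*n2 - 1 - (n2 - 1) ->
  - n1 * n2 + d2 * n1 - d1 * n2 + 1 * (d1 + n1 - 2) <= 0 ->
  (n1 = 4 /\ n2 = 3 /\ d1 = 7 /\ d2 = 6) \/
  (n1 = 3 /\ n2 = 3 /\ d1 = 5 /\ d2 = 6) \/
  (n1 = 2 /\ n2 = 3 /\ d1 = 3 /\ d2 = 6) \/
  (n1 = 1 /\ n2 = 3 /\ d1 = 1 /\ d2 = 6).
Proof.
  intros Hn H1 H2 H12 HD Ht Ht0 Hal Hd Hd1 Hd2 HC.
  remember (n2*a - d2) as q eqn:Eq.
  remember (d2*n1 - d1*n2) as D eqn:ED.
  assert (HDq : D = n2 * t - (n1+n2) * q) by (subst q D; rewrite Ht; ring).
  assert (E3 : (t - 3*q)*(n1+n2) = 3*D - t*(2*n2-n1)) by (rewrite HDq; ring).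
  assert (Hq : 3*q < t).
  { assert (0 < (t - 3*q)*(n1+n2)) by lia.
    apply Z.mul_pos_cancel_r in H; lia. }
  assert (HC2 : n2 * (- n1 * n2 + d2 * n1 - d1 * n2 + 1 * (d1 + n1 - 2))
     = D*(n2-1) + n1*(d2 - n2*n2 + n2) - 2*n2) by (subst D; ring).
  assert (HDn2 : D >= n2).
  { destruct (Z_lt_le_dec q 0).
    - assert (n2*t >= 0) by (clear - H2 Ht0; nia).
      assert (-(n1+n2)*q >= n1+n2) by (clear - l H1 H2; nia). lia.
    - assert (n2*t >= n2*(3*q+1)) by (clear - Hq H2; nia).
      assert (n1*q <= 2*n2*q) by (clear - l H12; nia). lia. }
  assert (Hr0 : n1*(d2 - n2*n2 + n2) >= 0) by (clear - Hd2 H1; nia).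
  assert (HCn : n2 * (- n1 * n2 + d2 * n1 - d1 * n2 + 1 * (d1 + n1 - 2)) <= 0) by (clear - HC H2; nia).
  assert (HA : D*(n2-1) <= 2*n2) by lia.
  assert (Hn2 : n2 <= 3) by (clear - HA HDn2 H2; nia).
  assert (Hn1 : n1 <= 5) by lia.
  assert (n2 = 2 \/ n2 = 3) as [E2|E2] by lia;
  (assert (n1 = 1 \/ n1 = 2 \/ n1 = 3 \/ n1 = 4 \/ n1 = 5) as [E1|[E1|[E1|[E1|E1]]]] by lia);
  subst n1 n2; subst q D; lia.
Qed.

Theorem proposition7p3 (n d : Z) (alpha : Q) (n1 d1 n2 d2 : Z) :
  4 <= n ->
  allowable n d 3 alpha n1 d1 2 n2 d2 1 ->
  (((n1, n2, d1, d2) = (4, 3, 7, 6) /\ (alpha == 3 # 2)%Q) \/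
   ((n1, n2, d1, d2) = (3, 3, 5, 6) /\ (alpha == 1)%Q) \/
   ((n1, n2, d1, d2) = (2, 3, 3, 6) /\ (alpha == 3 # 4)%Q) \/
   ((n1, n2, d1, d2) = (1, 3, 1, 6) /\ (alpha == 3 # 5)%Q) ->
     C21 n1 d1 2 n2 d2 1 = 0) /\
  (~ (((n1, n2, d1, d2) = (4, 3, 7, 6) /\ (alpha == 3 # 2)%Q) \/
      ((n1, n2, d1, d2) = (3, 3, 5, 6) /\ (alpha == 1)%Q) \/
      ((n1, n2, d1, d2) = (2, 3, 3, 6) /\ (alpha == 3 # 4)%Q) \/
      ((n1, n2, d1, d2) = (1, 3, 1, 6) /\ (alpha == 3 # 5)%Q)) ->
     0 < C21 n1 d1 2 n2 d2 1).
Proof.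
  intros Hn Hall. split.
  { intros [[E _]|[[E _]|[[E _]|[E _]]]]; injection E; intros; subst; reflexivity. }
  intros Hne.
  destruct Hall as [[H1 [H2 [_ [_ [En [Ed [_ [Hdd [Hkk Halpha]]]]]]]]] [Hlo [_ [Hdb [Hdb1 Hdb2]]]]].
  destruct Hdb2 as [[Hf _]|[_ Hdb2]]; [lia|].
  apply dbound_Z in Hdb; [|lia]. apply dbound_Z in Hdb1; [|lia]. apply dbound_Z in Hdb2; [|lia].
  apply qlt_frac in Hdd; try lia. apply qlt_frac in Hkk; try lia.
  assert (Hn12 : n1 < 2*n2) by lia.
  rewrite Halpha in Hlo. apply qlt_frac in Hlo; try lia.
  assert (Htt : 0 <= t_of n d < n /\ t_of n d = n * a_of n d - d).
  { unfold t_of, a_of. pose proof (Z.div_mod (-d) n ltac:(lia)).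
    pose proof (Z.mod_pos_bound (-d) n ltac:(lia)). split; [|reflexivity]. nia. }
  destruct Htt as [Ht0 Ht].
  destruct (Z_lt_le_dec 0 (C21 n1 d1 2 n2 d2 1)) as [Hp|Hp]; [exact Hp|exfalso].
  unfold C21 in Hp. subst n d.
  assert (Hc := core n1 n2 d1 d2 (a_of (n1+n2) (d1+d2)) (t_of (n1+n2) (d1+d2))
     ltac:(lia) ltac:(lia) ltac:(lia) ltac:(lia) ltac:(lia) Ht Ht0 ltac:(lia) ltac:(lia)
     ltac:(lia) ltac:(lia) ltac:(lia)).
  apply Hne.
  destruct Hc as [[-> [-> [-> ->]]]|[[-> [-> [-> ->]]]|[[-> [-> [-> ->]]]|[-> [-> [-> ->]]]]]];
  [left|right;left|right;right;left|right;right;right]; (split; [reflexivity|]);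
  rewrite Halpha; reflexivity.
Qed.
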